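(* Consider $p\ge 1$ machines, machine $v$ having nonnegative real parameters $k^A_v,k^B_v,t^A_v,t^B_v$, and a real bound $L$. For $1\le v\le p$ and an integer $a\ge 0$, let $b_v(a)=\{b\in\mathbb{Z}_{\ge 0} : f_v(a,b)\le L\}$ and $$dp(v,a)=\bigcup_{\substack{x_1+\dots+x_v=a\\ x_1,\dots,x_v\in\mathbb{Z}_{\ge 0}}}\big(b_1(x_1)+\dots+b_v(x_v)\big),$$ where $+$ denotes the sumset $X+Y=\{x+y : x\in X, y\in Y\}$. Then for every $1\le v\le p$ and every integer $a\ge 0$: (1) if $dp(v,a)=\emptyset$, then $dp(v,a+\delta)=\emptyset$ for every integer $\delta>0$; (2) if $dp(v,a)\neq\emptyset$ and $dp(v,a+1)\neq\emptyset$, then at least one of the following holds: (i) $dp(v,a)\cap dp(v,a+1)\neq\emptyset$; (ii) there exists $b_0\in dp(v,a)$ with $b_0+1\in dp(v,a+1)$.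
   Context: Each machine $v$ processes jobs of two types, A and B, in batches. A schedule of machine $v$ for the task-combination $(a,b)$ is a finite sequence of batches, each a nonempty group of jobs of a single type, with consecutive batches of different types, processing exactly $a$ A-jobs and $b$ B-jobs. An A-batch of $x$ jobs takes $t^A_v+k^A_v x^2$ time units and a B-batch of $x$ jobs takes $t^B_v+k^B_v x^2$ time units on machine $v$; the time of a schedule is the sum of its batch times (empty schedule: time $0$). $f_v(a,b)$ is the minimum time over all schedules of machine $v$ for $(a,b)$. *)

(* Defs.v *)
From mathcomp Require Import all_boot all_order all_algebra.
From mathcomp Require Import classical_sets reals.
Set Implicit Arguments. Unset Strict Implicit. Unset Printing Implicit Defensive.
Import Order.TTheory GRing.Theory Num.Theory.
Local Open Scope classical_set_scope.
Local Open Scope ring_scope.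

(* A batch is a pair (type, size); type [true] = A, [false] = B. *)
Definition batch := (bool * nat)%type.

Definition is_schedule (a b : nat) (s : seq batch) : Prop :=
  [/\ all (fun u : batch => 0 < u.2)%N s,
      sorted (fun u w : batch => u.1 != w.1) s,
      sumn [seq u.2 | u <- s & u.1] = a &
      sumn [seq u.2 | u <- s & ~~ u.1] = b].

Section Machines.
Variable R : realType.
Variables (kA kB tA tB : nat -> R).

Definition sched_time (v : nat) (s : seq batch) : R :=
  \sum_(u <- s) (if u.1 then tA v + kA v * (u.2)%:R ^+ 2
                 else tB v + kB v * (u.2)%:R ^+ 2).

(* f_v(a,b): minimum time over all schedules of machine v for (a,b),
   written as the infimum of the (finite, nonempty) set of schedule times. *)
Definition fv (v a b : nat) : R :=
  inf [set sched_time v s | s in [set s | is_schedule a b s]].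

Definition bset (L : R) (v a : nat) : set nat := [set b | fv v a b <= L].

End Machines.

Definition sumset (X Y : set nat) : set nat :=
  [set (x + y)%N | x in X & y in Y].

(* dp(v,a) = union over x_1+...+x_v = a of b_1(x_1) + ... + b_v(x_v).
   Machine i+1 gets x i, for i : 'I_v. *)
Definition dp (R : realType) (kA kB tA tB : nat -> R) (L : R) (v a : nat)
  : set nat :=
  \bigcup_(x in [set x : 'I_v -> nat | (\sum_(i < v) x i)%N = a])
     \big[sumset/[set 0%N]]_(i < v) bset kA kB tA tB L i.+1 (x i).

(* Main.v *)
Require Import Defs.
From mathcomp Require Import all_boot all_order all_algebra.
From mathcomp Require Import classical_sets reals.
Import Order.TTheory GRing.Theory Num.Theory.
Local Open Scope classical_set_scope.
Local Open Scope ring_scope.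

Lemma bigsum_in (v : nat) (F : 'I_v -> set nat) (g : 'I_v -> nat) :
  (forall i, F i (g i)) -> (\big[sumset/[set 0%N]]_(i < v) F i) (\sum_(i < v) g i)%N.
Proof.
elim: v F g => [|n IH] F g Hg; first by rewrite !big_ord0.
rewrite (big_ord_recl n F) big_ord_recl /= /sumset /=.
exists (g ord0) => //.
by exists (\sum_(i < n) g (lift ord0 i))%N => //; apply: IH.
Qed.

Lemma bigsum_out (v : nat) (F : 'I_v -> set nat) (m : nat) :
  (\big[sumset/[set 0%N]]_(i < v) F i) m ->
  exists g : 'I_v -> nat, (forall i, F i (g i)) /\ m = (\sum_(i < v) g i)%N.
Proof.
elim: v F m => [|n IH] F m.
  rewrite big_ord0 => ->. by exists (fun _ => 0%N); split => [[]|]; rewrite ?big_ord0.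
rewrite (big_ord_recl n F) /= /sumset /= => -[y Hy [x Hx <-]].
have [g [Hg ->]] := IH _ _ Hx.
exists (fun i : 'I_n.+1 => if unlift ord0 i is Some j then g j else y).
split.
  by move=> i; case: unliftP => [j ->|->].
rewrite big_ord_recl /= unlift_none; congr (_ + _)%N.
by apply: eq_bigr => i _; rewrite liftK.
Qed.

Lemma sorted_rcons_prefix (s0 : seq batch) u :
  sorted (fun u w : batch => u.1 != w.1) (rcons s0 u) ->
  sorted (fun u w : batch => u.1 != w.1) s0.
Proof. by case: s0 => //= x s; rewrite rcons_path => /andP[]. Qed.

Lemma sorted_rcons_repl (s0 : seq batch) u u' : u'.1 = u.1 ->
  sorted (fun u w : batch => u.1 != w.1) (rcons s0 u) ->
  sorted (fun u w : batch => u.1 != w.1) (rcons s0 u').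
Proof.
move=> E; case: s0 => [|x s] //=; rewrite !rcons_path => /andP[-> H].
by rewrite E.
Qed.

Section Sched.
Variables (R : realType) (kA kB tA tB : nat -> R) (w : nat).
Hypotheses (hkA : 0 <= kA w) (hkB : 0 <= kB w) (htA : 0 <= tA w) (htB : 0 <= tB w).

Let T := sched_time kA kB tA tB w.

Lemma term_ge0 (u : batch) :
  0 <= (if u.1 then tA w + kA w * (u.2)%:R ^+ 2 else tB w + kB w * (u.2)%:R ^+ 2).
Proof.
by case: u.1; apply: addr_ge0 => //; apply: mulr_ge0 => //; apply: exprn_ge0.
Qed.

Lemma time_ge0 s : 0 <= T s.
Proof. by apply: sumr_ge0 => u _; apply: term_ge0. Qed.

Lemma time_rcons s0 u : T (rcons s0 u) =
  T s0 + (if u.1 then tA w + kA w * (u.2)%:R ^+ 2 else tB w + kB w * (u.2)%:R ^+ 2).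
Proof. by rewrite /T /sched_time -cats1 big_cat big_seq1. Qed.

Lemma trunc_sched s : forall a b, is_schedule a.+1 b s ->
  exists b' s1 s2, [/\ (b' <= b)%N, is_schedule a.+1 b' s1, is_schedule a b' s2,
     T s1 <= T s & T s2 <= T s].
Proof.
elim/last_ind: s => [|s0 [t c] IH] a b.
  by case.
case => Hall Hsort HA HB.
move: Hall; rewrite all_rcons /= => /andP[Hc Hall].
have Hs0 := sorted_rcons_prefix _ _ Hsort.
move: HA HB; rewrite !filter_rcons /=.
case: t Hsort => Hsort /=.
- rewrite map_rcons sumn_rcons /= => HA HB.
  case: c Hc HA Hsort => [//|c'] _ HA Hsort.
  case: c' HA Hsort => [|c'] HA Hsort.
  + exists b, (rcons s0 (true, 1%N)), s0; split => //.
    * by split => //; rewrite ?all_rcons //= ?filter_rcons /= ?map_rcons ?sumn_rcons.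
    * split => //; first by move: HA; rewrite addn1 => -[].
    * by rewrite time_rcons lerDl (term_ge0 (true, 1%N)).
  + exists b, (rcons s0 (true, c'.+2)), (rcons s0 (true, c'.+1)); split => //.
    * by split => //; rewrite ?all_rcons //= ?filter_rcons /= ?map_rcons ?sumn_rcons.
    * split => //.
      - by rewrite all_rcons /= Hall.
      - by apply: (sorted_rcons_repl s0 (true, c'.+2)).
      - by rewrite filter_rcons /= map_rcons sumn_rcons; move: HA; rewrite !addnS => -[].
      - by rewrite filter_rcons /=.
    * rewrite !time_rcons /= lerD2l lerD2l ler_wpM2l // -!natrX ler_nat.
      by rewrite leq_exp2r.
- rewrite map_rcons sumn_rcons /= => HA HB.
  have [b' [s1 [s2 [Hb' S1 S2 T1 T2]]]] := IH a (sumn [seq u.2 | u <- s0 & ~~ u.1]) (And4 Hall Hs0 HA erefl).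
  exists b', s1, s2; split => //.
  + by rewrite -HB (leq_trans Hb') // leq_addr.
  + by rewrite (le_trans T1) // time_rcons lerDl (term_ge0 (false, c)).
  + by rewrite (le_trans T2) // time_rcons lerDl (term_ge0 (false, c)).
Qed.

Lemma sched_exists a b : exists s, is_schedule a b s.
Proof.
case: a => [|a]; case: b => [|b].
- by exists [::].
- by exists [:: (false, b.+1)]; split => //=; rewrite addn0.
- by exists [:: (true, a.+1)]; split => //=; rewrite addn0.
- by exists [:: (true, a.+1); (false, b.+1)]; split => //=; rewrite addn0.
Qed.

Lemma fv_le a b s : is_schedule a b s -> fv kA kB tA tB w a b <= T s.
Proof.
move=> Hs; apply: ge_inf; last by exists s.
by exists 0 => y [s' _ <-]; apply: time_ge0.
Qed.

Lemma le_fv a b m : (forall s, is_schedule a b s -> m <= T s) -> m <= fv kA kB tA tB w a b.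
Proof.
move=> H; apply: lb_le_inf.
  by have [s Hs] := sched_exists a b; exists (T s), s.
by move=> y [s Hs <-]; apply: H.
Qed.

Lemma keyK a b L : fv kA kB tA tB w a.+1 b <= L ->
  exists b', fv kA kB tA tB w a.+1 b' <= L /\ fv kA kB tA tB w a b' <= L.
Proof.
move=> HL.
pose g j := Num.max (fv kA kB tA tB w a.+1 j) (fv kA kB tA tB w a j).
have [i [_ Hi]] : exists i, (i <= b)%N /\ forall j, (j <= b)%N -> g i <= g j.
  elim: b {HL} => [|n [i [Hin Hi]]].
    by exists 0%N; split => // j; rewrite leqn0 => /eqP ->.
  have [le|lt] := leP (g i) (g n.+1).
    exists i; split; first by rewrite (leq_trans Hin).
    by move=> j; rewrite leq_eqVlt => /orP[/eqP ->//|]; rewrite ltnS; apply: Hi.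
  exists n.+1; split => // j; rewrite leq_eqVlt => /orP[/eqP ->//|]; rewrite ltnS => /Hi.
  by apply: le_trans; apply: ltW.
have : g i <= L.
  apply: (le_trans _ HL); apply: le_fv => s Hs.
  have [b' [s1 [s2 [Hb' S1 S2 T1 T2]]]] := trunc_sched _ _ _ Hs.
  apply: (le_trans (Hi _ Hb')); rewrite ge_max.
  by rewrite (le_trans (fv_le _ _ _ S1) T1) (le_trans (fv_le _ _ _ S2) T2).
by rewrite ge_max => /andP[H1 H2]; exists i.
Qed.

End Sched.

Lemma stepD (R : realType) (kA kB tA tB : nat -> R) (L : R) (v a : nat)
  (hpar : forall i : nat, (i < v)%N ->
     [/\ 0 <= kA i.+1, 0 <= kB i.+1, 0 <= tA i.+1 & 0 <= tB i.+1]) B :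
  dp kA kB tA tB L v a.+1 B ->
  exists B', dp kA kB tA tB L v a B' /\ dp kA kB tA tB L v a.+1 B'.
Proof.
case=> x /= Hx HB.
have [g [Hg HBe]] := bigsum_out _ _ _ HB.
have [j Hj] : exists j, (0 < x j)%N.
  case: (boolP [exists j, (0 < x j)%N]) => [/existsP//|/existsPn H].
  move: Hx; rewrite big1 // => i _.
  by move: (H i); rewrite lt0n negbK => /eqP.
case E: (x j) Hj => [//|c] _.
have [k1 k2 k3 k4] := hpar j (ltn_ord j).
have Hgj := Hg j; rewrite /bset /= E in Hgj.
have [b' [H1 H2]] := keyK _ _ _ _ _ _ k1 k2 k3 k4 _ _ _ Hgj.
pose x' := fun i => if i == j then c else x i.
pose g' := fun i => if i == j then b' else g i.
exists (\sum_(i < v) g' i)%N; split.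
- exists x'.
    rewrite /= (bigD1 j) //= /x' eqxx.
    have -> : (\sum_(i < v | i != j) (if i == j then c else x i) = \sum_(i < v | i != j) x i)%N.
      by apply: eq_bigr => i /negbTE ->.
    by move: Hx; rewrite (bigD1 j) //= E addSn => -[].
  by apply: bigsum_in => i; rewrite /x' /g'; case: eqP => [->|_] //; apply: Hg.
- exists x => //.
  apply: bigsum_in => i; rewrite /g'; case: eqP => [->|_]; [by rewrite E | by apply: Hg].
Qed.

Theorem lemma5 (R : realType) (p : nat) (kA kB tA tB : nat -> R) (L : R)
  (hp : (1 <= p)%N)
  (hpar : forall v : nat, (1 <= v <= p)%N ->
     [/\ 0 <= kA v, 0 <= kB v, 0 <= tA v & 0 <= tB v]) :
  forall v a : nat, (1 <= v <= p)%N ->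
    (dp kA kB tA tB L v a = set0 ->
       forall delta : nat, (0 < delta)%N ->
         dp kA kB tA tB L v (a + delta) = set0) /\
    (dp kA kB tA tB L v a !=set0 -> dp kA kB tA tB L v a.+1 !=set0 ->
       (dp kA kB tA tB L v a `&` dp kA kB tA tB L v a.+1 !=set0) \/
       (exists2 b0, dp kA kB tA tB L v a b0 & dp kA kB tA tB L v a.+1 b0.+1)).
Proof.
move=> v a /andP[H1v Hvp].
have hp' : forall i : nat, (i < v)%N ->
     [/\ 0 <= kA i.+1, 0 <= kB i.+1, 0 <= tA i.+1 & 0 <= tB i.+1].
  by move=> i Hi; apply: hpar; rewrite ltn0Sn /= (leq_trans Hi Hvp).
have down : forall d B, dp kA kB tA tB L v (a + d) B -> dp kA kB tA tB L v a !=set0.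
  elim=> [|d IH] B; first by rewrite addn0 => H; exists B.
  rewrite addnS => /(stepD _ _ _ _ _ _ _ _ hp') [B' [HB' _]]; exact: IH HB'.
split.
  move=> H0 delta _; apply/seteqP; split => // y Hy.
  by have [z] := down _ _ Hy; rewrite H0.
move=> _ [B HB]; left.
have [B' [H1 H2]] := stepD _ _ _ _ _ _ _ _ hp' _ HB.
by exists B'.
Qed.
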